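(* Let $n\ge1$, let $a_0^{(n)},a_1^{(n)},\dots,a_{n-1}^{(n)}$ be positive real numbers, and let $H$ be a nonzero real inner product space with inner product $(\cdot,\cdot)$ and norm $\|\cdot\|$. For $u^0,\dots,u^n\in H$ write $\nabla_\tau u^k=u^k-u^{k-1}$. Then the inequality $$\frac12\sum_{k=1}^n a_{n-k}^{(n)}\big(\|u^k\|^2-\|u^{k-1}\|^2\big)\le\Big(\sum_{k=1}^n a_{n-k}^{(n)}\nabla_\tau u^k,\;u^n\Big)$$ holds for all $u^0,\dots,u^n\in H$ if and only if $a_{n-k}^{(n)}$ is monotonically increasing with respect to $k$, i.e. $a_{n-1}^{(n)}\le a_{n-2}^{(n)}\le\dots\le a_0^{(n)}$.
   Context: In the paper the $a_{n-k}^{(n)}$ are discrete convolution kernels of a discrete Caputo operator $\mathrm{D}_\tau^\alpha u^n=\sum_{k=1}^n a_{n-k}^{(n)}\nabla_\tau u^k$, so the inequality reads $\frac12\mathrm{D}_\tau^\alpha\|u^n\|^2\le(\mathrm{D}_\tau^\alpha u^n,u^n)$. *)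

(* Defs.v *)
From mathcomp Require Import all_boot all_order all_algebra.
From mathcomp Require Import reals.
Set Implicit Arguments. Unset Strict Implicit. Unset Printing Implicit Defensive.
Import Order.TTheory GRing.Theory Num.Theory.
Local Open Scope ring_scope.

Record inner_product (R : realType) (V : lmodType R) := InnerProduct {
  ip :> V -> V -> R;
  ip_sym : forall u v, ip u v = ip v u;
  ip_linearl : forall (a : R) u v w, ip (a *: u + v) w = a * ip u w + ip v w;
  ip_ge0 : forall u, 0 <= ip u u;
  ip_eq0 : forall u, ip u u = 0 -> u = 0
}.

Definition ipnorm2 (R : realType) (V : lmodType R) (ipr : inner_product V) (u : V) : R :=
  ipr u u.

Definition nabla (R : realType) (V : lmodType R) (u : nat -> V) (k : nat) : V :=
  u k - u k.-1.

(* Main.v *)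
Require Import Defs.
From mathcomp Require Import all_boot all_order all_algebra.
From mathcomp Require Import reals.
From mathcomp Require Import ring lra zify.
Import Order.TTheory GRing.Theory Num.Theory.
Local Open Scope ring_scope.

Section S.
Variables (R : realType) (V : lmodType R) (ipr : inner_product V).

Lemma ipD u v w : ipr (u + v) w = ipr u w + ipr v w.
Proof. by rewrite -[u in LHS]scale1r ip_linearl mul1r. Qed.
Lemma ip0 w : ipr 0 w = 0.
Proof. have := ipD 0 0 w; rewrite addr0 => /eqP; rewrite -subr_eq0 => /eqP; lra. Qed.
Lemma ipZ c u w : ipr (c *: u) w = c * ipr u w.
Proof. by rewrite -[c *: u]addr0 ip_linearl ip0 addr0. Qed.
Lemma ipN u w : ipr (- u) w = - ipr u w.
Proof. by rewrite -scaleN1r ipZ mulN1r. Qed.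
Lemma ipB u v w : ipr (u - v) w = ipr u w - ipr v w.
Proof. by rewrite ipD ipN. Qed.
Lemma ipBr u v w : ipr w (u - v) = ipr w u - ipr w v.
Proof. by rewrite ip_sym ipB !(ip_sym ipr w). Qed.
Lemma ip_sum (r : seq nat) (F : nat -> V) w :
  ipr (\sum_(k <- r) F k) w = \sum_(k <- r) ipr (F k) w.
Proof. exact: (big_morph (fun x => ipr x w) (fun x y => ipD x y w) (ip0 w)). Qed.

Lemma ipsq x w : ipr (x - w) (x - w) = ipr x x - 2 * ipr x w + ipr w w.
Proof. rewrite !ipB !ipBr (ip_sym ipr w x); ring. Qed.

Lemma abel (b d : nat -> R) N : (1 <= N)%N ->
  \sum_(1 <= k < N.+1) b k * (d k.-1 - d k) =
  b 1%N * d 0%N + \sum_(1 <= k < N) (b k.+1 - b k) * d k - b N * d N.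
Proof.
elim: N => // N IH HN.
case: N IH HN => [|N] IH _.
  by rewrite big_nat1 big_geq // /= addr0 mulrBr.
rewrite big_nat_recr //= IH // [in RHS]big_nat_recr //=; ring.
Qed.

Lemma key (n : nat) (a : nat -> R) (u : nat -> V) :
  ipr (\sum_(1 <= k < n.+1) a (n - k)%N *: nabla u k) (u n)
  - 2^-1 * (\sum_(1 <= k < n.+1) a (n - k)%N * (ipnorm2 ipr (u k) - ipnorm2 ipr (u k.-1)))
  = 2^-1 * \sum_(1 <= k < n.+1) a (n - k)%N *
      (ipr (u k.-1 - u n) (u k.-1 - u n) - ipr (u k - u n) (u k - u n)).
Proof.
rewrite ip_sum.
have -> : \sum_(1 <= k < n.+1) ipr (a (n - k)%N *: nabla u k) (u n) =
  2^-1 * \sum_(1 <= k < n.+1) (2 * (a (n - k)%N * ipr (nabla u k) (u n))).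
  rewrite mulr_sumr; apply: eq_bigr => k _.
  by rewrite ipZ mulKf // pnatr_eq0.
apply/eqP; rewrite subr_eq -mulrDr; apply/eqP; congr (_ * _).
rewrite -big_split /=; apply: eq_bigr => k _.
rewrite /nabla /ipnorm2 !ipsq ipB; ring.
Qed.

Lemma main (n : nat) (a : nat -> R) (u : nat -> V) : (1 <= n)%N ->
  ipr (\sum_(1 <= k < n.+1) a (n - k)%N *: nabla u k) (u n)
  - 2^-1 * (\sum_(1 <= k < n.+1) a (n - k)%N * (ipnorm2 ipr (u k) - ipnorm2 ipr (u k.-1)))
  = 2^-1 * (a (n - 1)%N * ipr (u 0%N - u n) (u 0%N - u n)
     + \sum_(1 <= k < n) (a (n - k.+1)%N - a (n - k)%N) * ipr (u k - u n) (u k - u n)).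
Proof.
move=> Hn; rewrite key.
have := abel (fun k => a (n - k)%N) (fun k => ipr (u k - u n) (u k - u n)) n Hn.
move=> /= ->; rewrite subrr ip0 mulr0 subr0; done.
Qed.
End S.

Theorem theorem3 (R : realType) (V : lmodType R) (ipr : inner_product V)
  (n : nat) (a : nat -> R) :
  (1 <= n)%N ->
  (forall j, (j < n)%N -> 0 < a j) ->
  (exists v : V, v != 0) ->
  ((forall u : nat -> V,
      2^-1 * (\sum_(1 <= k < n.+1) a (n - k)%N * (ipnorm2 ipr (u k) - ipnorm2 ipr (u k.-1)))
      <= ipr (\sum_(1 <= k < n.+1) a (n - k)%N *: nabla u k) (u n))
   <->
   (forall j, (j.+1 < n)%N -> a j.+1 <= a j)).
Proof.
move=> Hn Hpos [v Hv]; split.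
- move=> H j Hj; rewrite leNgt; apply/negP => Hlt.
  set m := (n - j.+1)%N.
  have Hm1 : (1 <= m)%N by rewrite /m; lia.
  have Hmn : (m < n)%N by rewrite /m; lia.
  pose u := fun k : nat => if k == m then v else 0.
  have := H u; rewrite -subr_ge0 main //.
  have hun : u n = 0 by rewrite /u gtn_eqF.
  have hd : forall k, k != m -> ipr (u k - u n) (u k - u n) = 0.
    by move=> k hk; rewrite hun /u (negbTE hk) subr0 ip0.
  rewrite (hd 0%N) ?mulr0 ?add0r; last by lia.
  rewrite (@big_cat_nat _ _ _ m) //=; last by lia.
  rewrite big1_seq; last first.
    move=> k; rewrite mem_index_iota => /andP[_ hk]; rewrite hd ?mulr0 //; lia.
  rewrite big_ltn // big1_seq; last first.
    move=> k; rewrite mem_index_iota => /andP[_ /andP[hk _]]; rewrite hd ?mulr0 //; lia.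
  rewrite add0r addr0 hun subr0 /u eqxx.
  have -> : (n - m.+1)%N = j by rewrite /m; lia.
  have -> : (n - m)%N = j.+1 by rewrite /m; lia.
  have hvv : 0 < ipr v v.
    rewrite lt_neqAle ip_ge0 andbT eq_sym; apply/negP => /eqP /ip_eq0 hv0.
    by rewrite hv0 eqxx in Hv.
  rewrite pmulr_rge0 ?invr_gt0 ?ltr0n // pmulr_lge0 //.
  by rewrite subr_ge0 leNgt Hlt.
- move=> Hmono u; rewrite -subr_ge0 main //.
  rewrite mulr_ge0 ?invr_ge0 ?ler0n // addr_ge0 //.
    by rewrite mulr_ge0 ?ip_ge0 // ltW // Hpos //; lia.
  rewrite big_nat sumr_ge0 // => k /andP[hk1 hk2].
  rewrite mulr_ge0 ?ip_ge0 // subr_ge0.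
  have -> : (n - k)%N = (n - k.+1).+1 by lia.
  apply: Hmono; lia.
Qed.
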